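(* Let $c_n$ be the number of equivalence classes of $n$-diagrams under the action of the cyclic group $C_{2n}$ of order $2n$ generated by the rotation $j\mapsto j+1\pmod{2n}$ of $[2n]$. Then $c_n\ge \underline{c}_n := (2n)^{-1}(2n-1)!!$ for $n\ge1$, and \[ c_n \sim \frac{(2n-1)!!}{2n} \quad \text{as } n\to\infty. \]
   Context: A chord diagram of order $n$ (an $n$-diagram) is a 3-regular graph on vertex set $[2n]=\{1,\dots,2n\}$ containing the $2n$-circuit $\Delta_{2n}=(1\,2\,\dots\,2n)$ as a subgraph; the edges not in $\Delta_{2n}$ are the chords (they form a perfect matching of $[2n]$). Given a group $G$ of permutations of $[2n]$ acting on $\Delta_{2n}$, two $n$-diagrams are equivalent if some $g\in G$ takes the chords of the first onto the chords of the second. *)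

(* Defs.v *)
From mathcomp Require Import all_boot all_order all_algebra.
Set Implicit Arguments. Unset Strict Implicit. Unset Printing Implicit Defensive.
Import Order.TTheory GRing.Theory Num.Theory.

(* Vertices of Delta_{2n}: 'I_(2n) = {0,...,2n-1} (vertex j+1 of the paper is j here). *)

Lemma rot_proof (m k : nat) (i : 'I_m) : (i + k) %% m < m.
Proof. by rewrite ltn_mod (leq_ltn_trans (leq0n i) (ltn_ord i)). Qed.

Definition rot (m k : nat) (i : 'I_m) : 'I_m := Ordinal (rot_proof k i).

Definition perfect_matching (m : nat) (P : {set {set 'I_m}}) : bool :=
  partition P [set: 'I_m] && [forall e in P, #|e| == 2].

(* The n-diagrams, identified with their chord sets (the circuit Delta_{2n} is
   common to all of them). *)
Definition diagrams (n : nat) : {set {set {set 'I_(2 * n)}}} :=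
  [set P | perfect_matching P].

Definition chord_image (m : nat) (g : 'I_m -> 'I_m) (P : {set {set 'I_m}})
  : {set {set 'I_m}} := [set g @: e | e : {set 'I_m} in P].

Definition cyc_equiv (n : nat) : rel {set {set 'I_(2 * n)}} :=
  fun P Q => [exists k : 'I_(2 * n), chord_image (rot k) P == Q].

Definition c (n : nat) : nat :=
  #|equivalence_partition (@cyc_equiv n) (diagrams n)|.

Definition oddfact (n : nat) : nat := \prod_(i < n) (2 * i + 1).

(* Main.v *)
Require Import Defs.
From mathcomp Require Import all_boot all_order all_algebra.
From mathcomp Require Import zify.
Set Implicit Arguments. Unset Strict Implicit. Unset Printing Implicit Defensive.
Local Notation rot := Defs.rot.


Definition matching_of (T : finType) (A : {set T}) (P : {set {set T}}) :=
  partition P A && [forall e in P, #|e| == 2].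

Definition partner (T : finType) (x : T) (P : {set {set T}}) :=
  odflt x [pick y in pblock P x :\ x].

Lemma partner_of (T : finType) (x y : T) P :
  pblock P x = [set x; y] -> y != x -> partner x P = y.
Proof.
rewrite /partner => -> yx.
case: pickP => [z | /(_ y)]; last by rewrite !inE yx eqxx orbT.
by rewrite !inE => /andP[/negbTE -> /= /eqP].
Qed.

Lemma partnerP (T : finType) (A : {set T}) P x :
  matching_of A P -> x \in A ->
  [/\ pblock P x = [set x; partner x P], partner x P != x,
      partner x P \in A & pblock P x \in P].
Proof.
case/andP=> pP /forall_inP c2 xA.
have xc : x \in cover P by rewrite (cover_partition pP).
have bP := pblock_mem xc.
have := c2 _ bP; case/cards2P => a [b [ab eb]].
have xb : x \in pblock P x by rewrite mem_pblock.
have [y [yx ey]] : exists y, y != x /\ pblock P x = [set x; y].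
  move: xb; rewrite eb !inE => /orP[]/eqP ->.
    by exists b; split; [rewrite eq_sym|].
  by exists a; split; [|rewrite setUC].
have py := partner_of ey yx; rewrite py; split => //.
have : y \in pblock P x by rewrite ey !inE eqxx orbT.
by move/(subsetP (partitionS pP bP)).
Qed.

Lemma partition_remove (T : finType) (P Q : {set {set T}}) (A : {set T}) :
  partition P A -> Q \subset P -> partition (P :\: Q) (A :\: cover Q).
Proof.
move=> pP QP; have tP := partition_trivIset pP.
apply/and3P; split; last by rewrite inE (partition0 pP) andbF.
- rewrite -(cover_partition pP); apply/eqP/setP => z; rewrite inE.
  apply/bigcupP/andP => [[B /setDP[BP BQ] zB]|[zQ /bigcupP[B BP zB]]].
    split; last by apply/bigcupP; exists B.
    apply/bigcupP => -[B' B'Q zB'].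
    have := def_pblock tP BP zB; rewrite (def_pblock tP (subsetP QP _ B'Q) zB').
    by move=> e; move: BQ; rewrite -e B'Q.
  exists B => //; rewrite inE BP andbT; apply: contra zQ => BQ.
  by apply/bigcupP; exists B.
- exact: trivIsetD.
Qed.

Lemma matching_remove (T : finType) (P Q : {set {set T}}) (A : {set T}) :
  matching_of A P -> Q \subset P -> matching_of (A :\: cover Q) (P :\: Q).
Proof.
case/andP=> pP /forall_inP c2 QP; rewrite /matching_of partition_remove //=.
by apply/forall_inP => e /setDP[eP _]; apply: c2.
Qed.

Lemma matching_add (T : finType) (P : {set {set T}}) (A e : {set T}) :
  matching_of (A :\: e) P -> e \subset A -> #|e| = 2 -> matching_of A (e |: P).
Proof.
case/andP=> pP /forall_inP c2 eA ce.
have -> : A = e :|: (A :\: e).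
  by apply/setP => z; rewrite !inE; case ze: (z \in e) => //=; rewrite (subsetP eA).
rewrite /matching_of partitionU1 //.
- apply/forall_inP => f /setU1P[-> |]; [by rewrite ce | exact: c2].
- by rewrite -card_gt0 ce.
- by rewrite disjoints_subset; apply/subsetP => z ze; rewrite !inE ze.
Qed.

Lemma card_by_partner (T : finType) (A : {set T}) (S : {set {set {set T}}}) x :
  x \in A -> (forall P, P \in S -> matching_of A P) ->
  #|S| = \sum_(y in A :\ x) #|[set P in S | partner x P == y]|.
Proof.
move=> xA hS; rewrite -sum1_card (partition_big (partner x) (mem (A :\ x))).
  by apply: eq_bigr => y _; rewrite -sum1_card; apply: eq_bigl => P; rewrite inE.
move=> P PS; have [_ px pA _] := partnerP (hS _ PS) xA.
by rewrite !inE px pA.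
Qed.


Definition MS (T : finType) (A : {set T}) := [set P | matching_of A P].

Lemma e_notin (T : finType) (A e : {set T}) P :
  matching_of (A :\: e) P -> e != set0 -> e \notin P.
Proof.
case/andP => pP _ e0; apply/negP => eP.
have := partitionS pP eP; case/set0Pn: e0 => z ze /subsetP /(_ z ze).
by rewrite inE ze.
Qed.

Lemma fiber_card (T : finType) (A : {set T}) x y :
  x \in A -> y \in A :\ x ->
  #|[set P in MS A | partner x P == y]| = #|MS (A :\: [set x; y])|.
Proof.
move=> xA; rewrite !inE => /andP[yx yA].
set e := [set x; y].
have ce : #|e| = 2 by rewrite cards2 eq_sym yx.
have eA : e \subset A by apply/subsetP => z; rewrite !inE => /orP[]/eqP->.
have e0 : e != set0 by rewrite -card_gt0 ce.
have inF P : P \in [set P in MS A | partner x P == y] -> e \in P /\ matching_of A P.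
  rewrite !inE => /andP[mP /eqP py].
  have [pb _ _ bP] := partnerP mP xA.
  by split => //; rewrite /e -py -pb.
apply/eqP; rewrite eqn_leq; apply/andP; split.
- rewrite -(card_in_imset (f := fun P => P :\ e)); last first.
    move=> P Q /inF[eP _] /inF[eQ _] /= h.
    by rewrite -(setD1K eP) -(setD1K eQ) h.
  apply: subset_leq_card; apply/subsetP => _ /imsetP[P /inF[eP mP] ->].
  rewrite inE -[e in A :\: e]cover1; apply: matching_remove => //.
  by rewrite sub1set.
- rewrite -(card_in_imset (f := fun P => e |: P)); last first.
    move=> P Q /[!inE] mP mQ /= h.
    by rewrite -(setU1K (e_notin mP e0)) -(setU1K (e_notin mQ e0)) h.
  apply: subset_leq_card; apply/subsetP => _ /imsetP[P mP ->]; rewrite inE in mP.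
  have mA := matching_add mP eA ce.
  rewrite !inE mA /=; apply/eqP/partner_of => //.
  apply: def_pblock; first by case/andP: mA => /partition_trivIset.
    by rewrite setU11.
  by rewrite !inE eqxx.
Qed.

Lemma matchings_card (T : finType) h (A : {set T}) :
  #|A| = (2 * h)%N -> #|MS A| = oddfact h.
Proof.
elim: h A => [|h IH] A cA.
  move: cA; rewrite muln0 => /cards0_eq ->.
  rewrite /oddfact big_ord0 -(cards1 (@set0 {set T})).
  apply: eq_card => P; rewrite !inE /matching_of partition_set0.
  case: eqP => [-> |] //=; apply/forall_inP => e; by rewrite inE.
have : 0 < #|A| by rewrite cA muln_gt0.
case/card_gt0P => x xA.
rewrite (@card_by_partner _ A _ x xA); last by move=> P; rewrite inE.
rewrite (eq_bigr (fun _ => oddfact h)); last first.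
  move=> y yA; rewrite fiber_card //; apply: IH.
  move: yA; rewrite !inE => /andP[yx yA].
  rewrite cardsD cA; have -> : A :&: [set x; y] = [set x; y].
    by apply/setIidPr/subsetP => z; rewrite !inE => /orP[]/eqP->.
  rewrite cards2 eq_sym yx; lia.
rewrite sum_nat_const /oddfact big_ord_recr /=.
have := cardsD1 x A; rewrite xA cA => hc.
rewrite mulnC; lia.
Qed.

Lemma rot_comp m a b (i : 'I_m) : rot a (rot b i) = rot (b + a) i.
Proof. by apply: val_inj => /=; rewrite modnDml addnA. Qed.

Lemma rot_mod m a (i : 'I_m) : rot (a %% m) i = rot a i.
Proof. by apply: val_inj => /=; rewrite modnDmr. Qed.

Lemma rot0 m (i : 'I_m) : rot 0 i = i.
Proof. by apply: val_inj => /=; rewrite addn0 modn_small. Qed.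

Lemma rotMm m j (i : 'I_m) : rot (j * m) i = i.
Proof. by apply: val_inj => /=; rewrite addnC modnMDl modn_small. Qed.

Lemma rotI m k : injective (@rot m k).
Proof.
move=> i j /(congr1 (rot ((m.-1) * k))); rewrite !rot_comp.
have m0 : 0 < m by case: m i {j} => [[]|].
by rewrite -mulSn prednK // mulnC !rotMm.
Qed.

Lemma rot_fpf m k (i : 'I_m) : 0 < k < m -> rot k i != i.
Proof.
move=> /andP[k0 km]; apply/eqP => /(congr1 val) /= h.
have im := ltn_ord i.
case: (ltnP (i + k) m) => hh.
  rewrite modn_small // in h; lia.
have : (i + k) %% m = i + k - m.
  rewrite -{1}(subnK hh) modnDr modn_small //; lia.
lia.
Qed.

Definition Inv m k (P : {set {set 'I_m}}) := [forall f in P, rot k @: f \in P].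
Definition Orb m k (e : {set 'I_m}) := [set rot (j * k) @: e | j : 'I_m].

Fixpoint gg h := match h with
  | 0 => 1
  | S h1 => gg h1 + (2 * h1 + 3) * (match h1 with 0 => 1 | S h2 => gg h2 end)
  end.

Lemma gg_ge1 h : 1 <= gg h.
Proof. by elim: h => //= h IH; rewrite (leq_trans IH) ?leq_addr. Qed.

Lemma gg_rec h : gg h.-1 + 2 * h * gg h.-2 <= gg h.
Proof.
case: h => [|h] //=; rewrite leq_add2l; case: h => [|h] //=.
by rewrite leq_mul2r; apply/orP; right; lia.
Qed.

Lemma orb_iter m k (e : {set 'I_m}) j : 0 < m -> rot (j * k) @: e \in Orb k e.
Proof.
move=> m0; apply/imsetP; exists (Ordinal (ltn_pmod j m0)) => //.
apply: eq_imset => z /=; rewrite -rot_mod -[in RHS]rot_mod /=.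
by rewrite modnMml.
Qed.

Lemma rot_imset0 m (e : {set 'I_m}) : rot 0 @: e = e.
Proof. by rewrite (eq_imset _ (@rot0 m)) imset_id. Qed.

Lemma inv_iter m k (P : {set {set 'I_m}}) e j :
  Inv k P -> e \in P -> rot (j * k) @: e \in P.
Proof.
move=> /forall_inP iP eP; elim: j => [|j IH]; first by rewrite mul0n rot_imset0.
have -> : rot (j.+1 * k) @: e = rot k @: (rot (j * k) @: e).
  rewrite -imset_comp; apply: eq_imset => z /=.
  by rewrite rot_comp mulSn addnC.
exact: iP.
Qed.

Lemma orb_sub m k (P : {set {set 'I_m}}) e :
  Inv k P -> e \in P -> Orb k e \subset P.
Proof. by move=> iP eP; apply/subsetP => _ /imsetP[j _ ->]; apply: inv_iter. Qed.

Lemma inv_remove m k (P : {set {set 'I_m}}) e :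
  0 < m -> Inv k P -> e \in P -> Inv k (P :\: Orb k e).
Proof.
move=> m0 iP eP; apply/forall_inP => f /setDP[fP fO].
rewrite inE (forall_inP iP _ fP) andbT; apply: contra fO.
case/imsetP => j _ h.
suff <- : rot ((j + m.-1) * k) @: e = f by exact: orb_iter.
have -> : rot ((j + m.-1) * k) @: e = rot (m.-1 * k) @: (rot (j * k) @: e).
  by rewrite -imset_comp; apply: eq_imset => z /=; rewrite rot_comp mulnDl.
rewrite -h -imset_comp -[RHS]imset_id; apply: eq_imset => z /=.
by rewrite rot_comp -mulSn prednK // mulnC rotMm.
Qed.


Lemma sum_bound (T : finType) (B : {set T}) (f : T -> nat) z a b :
  f z <= a -> (forall y, y \in B -> y != z -> f y <= b) ->
  \sum_(y in B) f y <= a + #|B| * b.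
Proof.
move=> fz fy.
have H : forall y, y \in B -> f y <= (y == z) * a + b.
  move=> y yB; case: eqP => [-> | /eqP ne]; first by rewrite mul1n (leq_trans fz) ?leq_addr.
  by rewrite mul0n add0n fy.
apply: (@leq_trans (\sum_(y in B) ((y == z) * a + b))); first exact: leq_sum.
rewrite big_split /= sum_nat_const mulnC leq_add2r.
rewrite -big_distrl /= mulnC -{2}(muln1 a) leq_mul2l; apply/orP; right.
case: (boolP (z \in B)) => zB.
  rewrite (bigD1 z) //= eqxx big1 // => y /andP[_ /negbTE ->] //.
by rewrite big1 // => y yB; case: eqP => // e; rewrite -e yB in zB.
Qed.

Lemma cover_orb m k (e : {set 'I_m}) : 0 < m -> e \subset cover (Orb k e).
Proof.
move=> m0; apply: bigcup_sup; have := orb_iter k e 0 m0.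
by rewrite mul0n rot_imset0.
Qed.

Lemma inv_fiber m k h (A : {set 'I_m}) x y :
  (forall h', h' < h -> forall A' : {set 'I_m}, #|A'| <= (2 * h').+1 ->
     #|[set P in MS A' | Inv k P]| <= gg h') ->
  0 < k < m -> #|A| <= (2 * h).+1 -> x \in A -> y \in A :\ x ->
  #|[set P in [set P in MS A | Inv k P] | partner x P == y]|
    <= (if y == rot k x then gg h.-1 else gg h.-2).
Proof.
move=> IH km cA xA yAx; have m0 : 0 < m by lia.
move: (yAx); rewrite !inE => /andP[yx yA].
set e := [set x; y].
set F := [set P in _ | _].
set O := Orb k e.
have inF P : P \in F -> [/\ e \in P, matching_of A P, Inv k P & O \subset P].
  rewrite !inE => /andP[/andP[mP iP] /eqP py].
  have [pb _ _ bP] := partnerP mP xA.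
  have eP : e \in P by rewrite /e -py -pb.
  by split => //; apply: orb_sub.
have key : forall h', h' < h -> #|A :\: cover O| <= (2 * h').+1 -> #|F| <= gg h'.
  move=> h' lt ch; apply: leq_trans (IH h' lt _ ch).
  rewrite -(card_in_imset (f := fun P => P :\: O)); last first.
    move=> P Q /inF[_ _ _ OP] /inF[_ _ _ OQ] /= hh.
    have eq (R : {set {set 'I_m}}) : O \subset R -> R = O :|: (R :\: O).
      move=> OR; apply/setP => z; rewrite !inE.
      by case zO: (z \in O) => //=; rewrite (subsetP OR).
    by rewrite (eq _ OP) (eq _ OQ) hh.
  apply: subset_leq_card; apply/subsetP => _ /imsetP[P /inF[eP mP iP OP] ->].
  by rewrite !inE matching_remove //= inv_remove.
have eA : e \subset A by apply/subsetP => z; rewrite !inE => /orP[]/eqP->.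
have ce : #|e| = 2 by rewrite cards2 eq_sym yx.
have eO : e \subset A :&: cover O by rewrite subsetI eA cover_orb.
case: ifP => [_ | /negbT yr].
  have hA := subset_leq_card eA; rewrite ce in hA.
  apply: key; first by move: hA cA; clear; lia.
  have cI : #|A :&: cover O| <= #|A| := subset_leq_card (subsetIl _ _).
  rewrite cardsD; have := subset_leq_card eO; rewrite ce; move: cI cA; clear; lia.
case: (set_0Vmem F) => [-> | [P PF]]; first by rewrite cards0.
have [eP mP iP OP] := inF P PF.
set f := rot k @: e.
have fP : f \in P by apply: (forall_inP iP).
have fO : f \in O by rewrite /f -[k in rot k]mul1n orb_iter.
have xf : rot k x \in f by apply: imset_f; rewrite !inE eqxx.
have xe : rot k x \notin e.
  rewrite !inE negb_or (rot_fpf x km) /=; by rewrite eq_sym.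
have ef : e != f by apply: contraNneq xe => ->.
case/andP: mP => pP /forall_inP c2.
have dj : [disjoint e & f] by apply: (trivIsetP (partition_trivIset pP)).
have cef : #|e :|: f| = 4.
  by rewrite cardsU (eqP (c2 _ fP)) ce (disjoint_setI0 dj) cards0.
have efO : e :|: f \subset A :&: cover O.
  rewrite subUset eO subsetI (partitionS pP fP) /=.
  by apply: bigcup_sup fO.
have := subset_leq_card efO; rewrite cef => c4.
have cI : #|A :&: cover O| <= #|A| := subset_leq_card (subsetIl _ _).
apply: key; first by move: c4 cI cA; clear; lia.
rewrite cardsD; move: c4 cI cA; clear; lia.
Qed.

Lemma inv_count m k h (A : {set 'I_m}) : 0 < k < m -> #|A| <= (2 * h).+1 ->
  #|[set P in MS A | Inv k P]| <= gg h.
Proof.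
move=> km; have m0 : 0 < m by lia.
elim/ltn_ind: h A => h IH A cA.
case: (set_0Vmem A) => [A0 | [x xA]].
  rewrite A0.
  have sub : [set P in MS set0 | Inv k P] \subset MS (@set0 'I_m).
    by apply/subsetP => P; rewrite inE => /andP[].
  apply: (leq_trans (subset_leq_card sub)).
  rewrite (@matchings_card _ 0) ?cards0 // /oddfact big_ord0; exact: gg_ge1.
set S := [set P in MS A | Inv k P].
rewrite (@card_by_partner _ A S x xA); last by move=> P; rewrite !inE => /andP[].
apply: leq_trans (gg_rec h).
have cAx : #|A :\ x| <= 2 * h.
  by move: cA; rewrite (cardsD1 x A) xA; lia.
have := @sum_bound _ (A :\ x) (fun y => #|[set P in S | partner x P == y]|) (rot k x) (gg h.-1) (gg h.-2).
case: (boolP (rot k x \in A :\ x)) => rA.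
- move=> H; apply: leq_trans (H _ _) _.
  + by have := inv_fiber IH km cA xA rA; rewrite eqxx.
  + by move=> y yA /negbTE ny; have := inv_fiber IH km cA xA yA; rewrite ny.
  + by rewrite leq_add2l leq_mul2r cAx orbT.
- move=> _; apply: (leq_trans _ (leq_addl (gg h.-1) _)).
  apply: (@leq_trans (#|A :\ x| * gg h.-2)); last by rewrite leq_mul2r cAx orbT.
  rewrite -sum_nat_const; apply: leq_sum => y yA.
  have := inv_fiber IH km cA xA yA; case: eqP => // ey.
  by rewrite -ey yA in rA.
Qed.


Lemma card_bigcup_le (I T : finType) (p : pred I) (F : I -> {set T}) :
  #|\bigcup_(i | p i) F i| <= \sum_(i | p i) #|F i|.
Proof.
elim/big_rec2: _ => [|i k U _ h]; first by rewrite cards0.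
by rewrite (leq_trans (leq_card_setU _ _).1) ?leq_add2l.
Qed.

Lemma D_card n : #|diagrams n| = oddfact n.
Proof.
rewrite -(@matchings_card _ n [set: 'I_(2 * n)]) ?cardsT ?card_ord //; by apply: eq_card => P; rewrite !inE.
Qed.

Lemma ci_comp m a b (P : {set {set 'I_m}}) :
  chord_image (rot a) (chord_image (rot b) P) = chord_image (rot (b + a)) P.
Proof.
rewrite /chord_image -imset_comp; apply: eq_imset => e /=.
by rewrite -imset_comp; apply: eq_imset => z /=; rewrite rot_comp.
Qed.

Lemma ci_mod m a (P : {set {set 'I_m}}) :
  chord_image (rot (a %% m)) P = chord_image (rot a) P.
Proof. by apply: eq_imset => e; apply: eq_imset => z; rewrite rot_mod. Qed.

Lemma ci_Mm m j (P : {set {set 'I_m}}) : chord_image (rot (j * m)) P = P.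
Proof.
rewrite /chord_image (eq_imset _ (fun e => eq_imset _ (@rotMm m j))).
rewrite (eq_imset _ (fun e => imset_id e)) imset_id //.
Qed.

Lemma ci_D n k P : P \in diagrams n -> chord_image (rot k) P \in diagrams n.
Proof.
rewrite !inE /perfect_matching => /andP[pP /forall_inP c2].
have inj : injective (rot k : 'I_(2 * n) -> 'I_(2 * n)) := @rotI _ _.
have fT : rot k @: [set: 'I_(2 * n)] = setT.
  by apply/eqP; rewrite eqEcard subsetT (card_imset _ inj) leqnn.
apply/andP; split; first by rewrite /chord_image -fT imset_partition.
apply/forall_inP => _ /imsetP[e eP ->]; rewrite (card_imset _ inj); exact: c2.
Qed.


Lemma ci0 m (P : {set {set 'I_m}}) : chord_image (rot 0) P = P.
Proof. by have := ci_Mm 0 P; rewrite mul0n. Qed.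

Lemma ci_idx m (P : {set {set 'I_m}}) r : 0 < m ->
  exists k : 'I_m, chord_image (rot k) P = chord_image (rot r) P.
Proof. by move=> m0; exists (Ordinal (ltn_pmod r m0)); rewrite /= ci_mod. Qed.

Lemma cyc_eqrel n : 0 < n -> {in diagrams n & &, equivalence_rel (@cyc_equiv n)}.
Proof.
move=> n0; have m0 : 0 < 2 * n by rewrite muln_gt0.
move=> x y z _ _ _; split.
  by apply/existsP; exists (Ordinal m0); rewrite /= ci0.
case/existsP => a /eqP <-.
apply/existsP/existsP => -[b /eqP <-].
  have [c hc] := ci_idx (chord_image (rot a) x) (b + (2 * n - a)) m0.
  exists c; rewrite hc ci_comp -ci_mod.
  have -> : (a + (b + (2 * n - a))) = b + 2 * n.
    have := ltn_ord a; lia.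
  by rewrite modnDr ci_mod.
have [c hc] := ci_idx x (a + b) m0.
by exists c; rewrite hc ci_comp.
Qed.

Lemma part1 n : 0 < n -> oddfact n <= 2 * n * c n.
Proof.
move=> n0; rewrite -D_card (card_partition (equivalence_partitionP (cyc_eqrel n0))).
rewrite /c; set E := equivalence_partition _ _.
apply: (@leq_trans (\sum_(B in E) (2 * n))); last by rewrite sum_nat_const mulnC.
apply: leq_sum => _ /imsetP[x xD ->].
apply: (@leq_trans #|[set chord_image (rot k) x | k : 'I_(2 * n)]|).
  apply: subset_leq_card; apply/subsetP => y; rewrite inE => /andP[_ /existsP[k /eqP <-]].
  exact: imset_f.
by rewrite (leq_trans (leq_imset_card _ _)) // card_ord.
Qed.


Definition Sym n := [set P in diagrams n |
  [exists k : 'I_(2 * n), (0 < k) && (chord_image (rot k) P == P)]].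

Lemma mod_nz m a b : a < m -> b < m -> a != b -> 0 < (b + (m - a)) %% m.
Proof.
move=> am bm ab; case: (ltngtP a b) => h; last by rewrite h eqxx in ab.
- have -> : b + (m - a) = (b - a) + m by lia.
  by rewrite modnDr modn_small; lia.
- by rewrite modn_small; lia.
Qed.

Lemma free_block n x : 0 < n -> x \in diagrams n -> x \notin Sym n ->
  2 * n <= #|[set y in diagrams n | cyc_equiv x y]|.
Proof.
move=> n0 xD xS; have m0 : 0 < 2 * n by rewrite muln_gt0.
set f := fun k : 'I_(2 * n) => chord_image (rot k) x.
have finj : injective f.
  move=> a b fab; apply/eqP; apply: contraR xS => ab.
  have e1 : chord_image (rot (2 * n - a)) (f a) = x.
    rewrite /f ci_comp; have := ltn_ord a => al.
    by have := ci_Mm 1 x; rewrite mul1n subnKC // ltnW.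
  have e2 : chord_image (rot (2 * n - a)) (f b) = chord_image (rot (b + (2 * n - a))) x.
    by rewrite /f ci_comp.
  rewrite inE xD /=; apply/existsP; exists (Ordinal (ltn_pmod (b + (2 * n - a)) m0)).
  rewrite /= ci_mod -e2 -fab e1 eqxx andbT.
  by apply: mod_nz => //; apply: contraNneq ab => e; apply/eqP/val_inj.
apply: (@leq_trans #|[set f k | k in [set: 'I_(2 * n)]]|).
  by rewrite (card_imset _ finj) cardsT card_ord.
apply: subset_leq_card; apply/subsetP => _ /imsetP[k _ ->].
rewrite inE ci_D //=; apply/existsP; exists k; by [].
Qed.

Lemma part2a n : 0 < n -> 2 * n * c n <= oddfact n + 2 * n * #|Sym n|.
Proof.
move=> n0; have eqr := cyc_eqrel n0.
have pE := equivalence_partitionP eqr.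
rewrite -D_card (card_partition pE) /c.
set E := equivalence_partition _ _.
set S := Sym n.
rewrite mulnC -sum_nat_const (bigID (fun B => B :&: S == set0)) /=.
apply: leq_add.
  apply: (@leq_trans (\sum_(B in E | B :&: S == set0) #|B|)).
    apply: leq_sum => _ /andP[/imsetP[x xD ->] BS].
    apply: free_block => //; apply: contraTN BS => xS; apply/set0Pn.
    exists x; rewrite inE xS andbT inE xD /=; exact: (eqr x x x xD xD xD).1.
  by rewrite [X in _ <= X](bigID (fun B => B :&: S == set0)) /= leq_addr.
apply: (@leq_trans (#|[set B in E | B :&: S != set0]| * (2 * n))).
  by rewrite -sum_nat_const; apply: eq_leq; apply: eq_bigl => B; rewrite inE.
rewrite [X in _ <= X]mulnC leq_mul2r; apply/orP; right.
apply: (@leq_trans #|pblock E @: S|); last exact: leq_imset_card.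
apply: subset_leq_card; apply/subsetP => B; rewrite inE => /andP[BE /set0Pn[s]].
rewrite inE => /andP[sB sS]; apply/imsetP; exists s => //.
by rewrite (def_pblock (partition_trivIset pE) BE sB).
Qed.

Lemma part2b n : 0 < n -> #|Sym n| <= 2 * n * gg n.
Proof.
move=> n0.
apply: (@leq_trans #|\bigcup_(k : 'I_(2 * n) | 0 < k) [set P in MS [set: 'I_(2 * n)] | Inv k P]|).
  apply: subset_leq_card; apply/subsetP => P; rewrite inE => /andP[PD /existsP[k /andP[k0 /eqP hk]]].
  apply/bigcupP; exists k => //; rewrite !inE.
  apply/andP; split; first by rewrite inE in PD.
  apply/forall_inP => f fP; rewrite -{1}hk; exact: imset_f.
apply: (leq_trans (card_bigcup_le _ _)).
apply: (@leq_trans (\sum_(k : 'I_(2 * n)) gg n)); last by rewrite sum_nat_const card_ord.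
apply: (@leq_trans (\sum_(k : 'I_(2 * n) | 0 < k) gg n)); last first.
  by rewrite [X in _ <= X](bigID (fun k : 'I_(2 * n) => 0 < k)) /= leq_addr.
apply: leq_sum => k k0; apply: inv_count; first by rewrite k0 ltn_ord.
by rewrite cardsT card_ord.
Qed.


Lemma poly_ineq h : 4 <= h ->
  (2*h-1)*(h+2)^3*h^3 + (2*h+3)*(h+2)^3*(h+1)^3 <= (2*h+1)*(2*h-1)*(h+1)^3*h^3.
Proof.
move=> h4; have [t ->] : exists t, h = t + 4 by exists (h - 4); lia.
rewrite !expnS !expn0 !muln1.
nia.
Qed.

Lemma oddfactS h : oddfact h.+1 = oddfact h * (2 * h + 1).
Proof. by rewrite /oddfact big_ord_recr. Qed.

Lemma gg_bound h : gg h * (h + 1) ^ 3 <= 158 * oddfact h.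
Proof.
elim/ltn_ind: h => h IH.
case: (leqP h 4) => h4.
  by case: h h4 {IH} => [|[|[|[|[|]]]]] // _; rewrite /oddfact ?big_ord_recr big_ord0.
case: h h4 IH => [//|h] h4 IH.
have Ha := IH h (ltnSn h).
case: h h4 Ha IH => [//|h] h4 Ha IH.
have Hb := IH h (ltnW (ltnSn _)).
rewrite oddfactS in Ha.
rewrite !oddfactS.
have -> : gg h.+2 = gg h.+1 + (2 * h.+1 + 3) * gg h by [].
set a := gg h.+1 in Ha *; set b := gg h in Hb *; set o := oddfact h in Ha Hb *.
have Hp := poly_ineq (h := h.+1) h4.
have H1 := leq_mul Ha (leqnn ((h.+1+2)^3 * (h.+1)^3)).
have H2 := leq_mul Hb (leqnn ((2*h.+1+3)*(h.+1+2)^3*(h.+1+1)^3)).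
have H3 := leq_mul (leqnn (158 * o)) Hp.
have pos : 0 < (h.+1 + 1) ^ 3 * (h.+1) ^ 3 by rewrite muln_gt0 !expn_gt0.
rewrite -(leq_pmul2r pos).
move: H1 H2 H3; rewrite !expnS !expn0 !muln1.
clear; nia.
Qed.

Import Order.TTheory GRing.Theory Num.Theory.
Local Open Scope ring_scope.

Lemma key n : (0 < n)%N -> ((2 * n * c n - oddfact n) * n <= 632 * oddfact n)%N.
Proof.
move=> n0.
have h1 := part2a n0; have h2 := part2b n0; have h3 := gg_bound n.
have h4 : (2 * n * c n - oddfact n <= 2 * n * (2 * n * gg n))%N.
  rewrite leq_subLR (leq_trans h1) // leq_add2l leq_mul2l h2 orbT //.
apply: (leq_trans (leq_mul h4 (leqnn n))).
have h5 : (n * n * n <= (n + 1) ^ 3)%N.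
  by rewrite !expnS expn0 muln1; nia.
have := leq_mul (leqnn 4) h3.
have := leq_mul (leqnn (4 * gg n)) h5.
move: n0; clear; nia.
Qed.

Lemma oddfact_gt0 n : (0 < oddfact n)%N.
Proof. by rewrite /oddfact prodn_gt0 // => i; rewrite addn1. Qed.

Lemma aux (x y z w : rat) : 0 < z -> w < x * y -> w * z < x * z * y.
Proof. by move=> z0 h; rewrite -mulrA (mulrC z) mulrA ltr_pM2r. Qed.

Theorem corollary1 :
  (forall n : nat, (0 < n)%N ->
     (oddfact n)%:R / (2 * n)%:R <= (c n)%:R :> rat) /\
  (forall eps : rat, 0 < eps ->
     exists N : nat, forall n : nat, (N <= n)%N ->
       `| (c n)%:R * (2 * n)%:R / (oddfact n)%:R - 1 | < eps).
Proof.
split.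
  move=> n n0; rewrite ler_pdivrMr ?ltr0n ?muln_gt0 // -natrM ler_nat mulnC.
  exact: part1.
move=> eps e0; exists (maxn 1 (Num.bound (632 / eps))) => n.
rewrite geq_max => /andP[n0 nb].
have O0 := oddfact_gt0 n.
have p1 := part1 n0.
have hk := key n0.
set X := (2 * n * c n)%N in p1 hk *.
set O := oddfact n in O0 p1 hk *.
have -> : (c n)%:R * (2 * n)%:R = X%:R :> rat by rewrite -natrM mulnC.
have -> : X%:R / O%:R - 1 = (X - O)%:R / O%:R :> rat.
  by rewrite natrB // mulrBl divff // pnatr_eq0 -lt0n.
rewrite ger0_norm ?divr_ge0 ?ler0n // ltr_pdivrMr ?ltr0n //.
have nq : 0 < n%:R :> rat by rewrite ltr0n.
rewrite -(ltr_pM2r nq).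
have hk' : (X - O)%:R * n%:R <= 632 * O%:R :> rat.
  by rewrite -natrM -(natrM _ 632) ler_nat.
apply: (le_lt_trans hk').
have bnd : 632 / eps < n%:R.
  apply: (lt_le_trans (archi_boundP _)); first by rewrite divr_ge0 // ltW.
  by rewrite ler_nat.
have b2 : 632 < eps * n%:R by rewrite mulrC -ltr_pdivrMr.
have Oq : 0 < O%:R :> rat by rewrite ltr0n.
exact: (aux Oq b2).
Qed.
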